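(* Let $\mathbf a=(a_1,\ldots,a_n)\in\mathbb Z_{\geq1}^n$ and $\mathbf b=(b_1,\ldots,b_m)\in\mathbb Z_{\geq1}^m$. If $(\mathbf x,\mathbf y)$, with $\mathbf x=(x_1,\ldots,x_n)$ and $\mathbf y=(y_1,\ldots,y_m)$, is a minimal solution of the equation $x_1a_1+\cdots+x_na_n=y_1b_1+\cdots+y_mb_m$, then there exist rational numbers $\lambda_{i,j}$ ($1\leq i\leq n$, $1\leq j\leq m$) such that $\sum_{j=1}^m \lambda_{i,j} b_j=x_i$ for $1\leq i\leq n$; $\sum_{i=1}^n \lambda_{i,j} a_i=y_j$ for $1\leq j\leq m$; $\sum_{i=1}^n\sum_{j=1}^m\lambda_{i,j}\leq 1$; and $\lambda_{i,j}\geq 0$ for all $1\leq i\leq n$, $1\leq j\leq m$.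
   Context: $\mathcal S(\mathbf a,\mathbf b)$ denotes the set of all pairs $(\mathbf x,\mathbf y)\in\mathbb Z_{\geq0}^n\times\mathbb Z_{\geq0}^m$ satisfying $\sum_i x_ia_i=\sum_j y_jb_j$. A solution in $\mathcal S(\mathbf a,\mathbf b)$ is called minimal if it is nonzero and cannot be written as the sum of two nonzero solutions in $\mathcal S(\mathbf a,\mathbf b)$; the set of minimal solutions is denoted $\mathcal H(\mathbf a,\mathbf b)$ (the Hilbert basis of the cone $\{(\mathbf x,\mathbf y)\in\mathbb R_{\geq0}^{n+m}:\mathbf a\cdot\mathbf x=\mathbf b\cdot\mathbf y\}$). *)

(* Defs.v *)
From mathcomp Require Import all_boot all_order all_algebra.
Set Implicit Arguments. Unset Strict Implicit. Unset Printing Implicit Defensive.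

Definition is_solution (n m : nat) (a : 'I_n -> nat) (b : 'I_m -> nat)
    (x : 'I_n -> nat) (y : 'I_m -> nat) : Prop :=
  (\sum_(i < n) x i * a i = \sum_(j < m) y j * b j)%N.

Definition is_nonzero (n m : nat) (x : 'I_n -> nat) (y : 'I_m -> nat) : Prop :=
  (exists i, x i <> 0%N) \/ (exists j, y j <> 0%N).

Definition is_minimal_solution (n m : nat) (a : 'I_n -> nat) (b : 'I_m -> nat)
    (x : 'I_n -> nat) (y : 'I_m -> nat) : Prop :=
  is_solution a b x y /\ is_nonzero x y /\
  ~ (exists (x1 x2 : 'I_n -> nat) (y1 y2 : 'I_m -> nat),
       is_solution a b x1 y1 /\ is_nonzero x1 y1 /\
       is_solution a b x2 y2 /\ is_nonzero x2 y2 /\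
       (forall i, x i = x1 i + x2 i)%N /\ (forall j, y j = y1 j + y2 j)%N).

(* Main.v *)
Require Import Defs.
From mathcomp Require Import all_boot all_order all_algebra.
From mathcomp Require Import zify ring.
Import Order.TTheory GRing.Theory Num.Theory.

Lemma take_split (T : Type) (s : seq T) k k' :
  k <= k' -> take k' s = take k s ++ drop k (take k' s).
Proof. by move=> h; rewrite -{1}(cat_take_drop k (take k' s)) take_takel. Qed.

Lemma sum_pos (T : Type) (F : T -> nat) (s : seq T) :
  (forall v, 0 < F v) -> size s <= \sum_(v <- s) F v.
Proof.
move=> hF; elim: s => [|v s IH]; first by rewrite big_nil.
rewrite big_cons /=; have := hF v; lia.
Qed.

Lemma sum_take_drop (T : Type) (F : T -> nat) (s : seq T) k :
  \sum_(v <- s) F v = \sum_(v <- take k s) F v + \sum_(v <- drop k s) F v.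
Proof. by rewrite -big_cat cat_take_drop. Qed.

Lemma sum_take_slice (T : Type) (F : T -> nat) (s : seq T) k k' : k <= k' ->
  \sum_(v <- take k' s) F v = \sum_(v <- take k s) F v + \sum_(v <- drop k (take k' s)) F v.
Proof. by move=> h; rewrite {1}(@take_split _ s _ _ h) big_cat. Qed.

Lemma size_slice (T : Type) (s : seq T) k k' : k' <= size s ->
  size (drop k (take k' s)) = k' - k.
Proof. by move=> h; rewrite size_drop size_takel. Qed.

Lemma count_slice (T : eqType) (s : seq T) k k' (i : T) :
  count_mem i (drop k (take k' s)) <= count_mem i s.
Proof.
rewrite -{2}(cat_take_drop k' s) -{2}(cat_take_drop k (take k' s)) !count_cat.
lia.
Qed.

Lemma count_take_le (T : eqType) (s : seq T) k k' (i : T) : k <= k' ->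
  count_mem i (take k s) <= count_mem i (take k' s).
Proof. by move=> h; rewrite (@take_split _ s _ _ h) count_cat leq_addr. Qed.

Lemma sum_count_mul n (a : 'I_n -> nat) (s : seq 'I_n) :
  \sum_(i < n) count_mem i s * a i = \sum_(v <- s) a v.
Proof.
elim: s => [|v s IH]; first by rewrite big_nil; apply: big1 => i _.
rewrite big_cons -IH.
rewrite (eq_bigr (fun i => (v == i) * a i + count_mem i s * a i)); last first.
  by move=> i _ /=; rewrite mulnDl.
rewrite big_split /=; congr (_ + _).
rewrite (bigD1 v) //= eqxx mul1n big1 ?addn0 // => i /negbTE.
by rewrite eq_sym => ->.
Qed.

Lemma sum_count n (s : seq 'I_n) : \sum_(i < n) count_mem i s = size s.
Proof.
rewrite -sum1_size -(@sum_count_mul n (fun _ => 1) s).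
by apply: eq_bigr => i _; rewrite muln1.
Qed.

Lemma exists_seq n (x : 'I_n -> nat) : exists s : seq 'I_n, forall i, count_mem i s = x i.
Proof.
exists (flatten [seq nseq (x i) i | i <- enum 'I_n]) => i.
have : forall r : seq 'I_n, uniq r ->
  count_mem i (flatten [seq nseq (x i) i | i <- r]) = (i \in r) * x i.
  elim=> [|v r IH] //= /andP [hv hu].
  rewrite count_cat count_nseq IH // in_cons /=.
  case: (eqVneq v i) => [<-|hvi]; first by rewrite (negbTE hv) /=; lia.
  by [].
by move=> ->; rewrite ?enum_uniq // mem_enum mul1n.
Qed.

Lemma mod2 t S : t < S + S -> t %% S = if t < S then t else t - S.
Proof.
case: ifP => h1 h2; first by rewrite modn_small.
have -> : t = (t - S) + S by lia.
rewrite modnDr modn_small; lia.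
Qed.

Lemma no_sub n m (a : 'I_n -> nat) (b : 'I_m -> nat) x y
  (u : seq 'I_n) (w : seq 'I_m) :
  is_minimal_solution a b x y ->
  (forall i, count_mem i u <= x i) -> (forall j, count_mem j w <= y j) ->
  \sum_(v <- u) a v = \sum_(v <- w) b v ->
  0 < size u + size w ->
  size u + size w < \sum_(i < n) x i + \sum_(j < m) y j -> False.
Proof.
move=> [Hs [_ Hmin]] Hu Hw Hsum Hpos Hlt; apply: Hmin.
exists (fun i => count_mem i u), (fun i => x i - count_mem i u),
  (fun j => count_mem j w), (fun j => y j - count_mem j w).
have Ex : \sum_(i < n) x i * a i =
   \sum_(i < n) count_mem i u * a i + \sum_(i < n) (x i - count_mem i u) * a i.
  rewrite -big_split; apply: eq_bigr => i _ /=; rewrite -mulnDl subnKC //.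
have Ey : \sum_(j < m) y j * b j =
   \sum_(j < m) count_mem j w * b j + \sum_(j < m) (y j - count_mem j w) * b j.
  rewrite -big_split; apply: eq_bigr => j _ /=; rewrite -mulnDl subnKC //.
have S1 : is_solution a b (fun i => count_mem i u) (fun j => count_mem j w).
  by rewrite /is_solution !sum_count_mul.
split; first exact: S1.
split.
  clear -Hpos.
  case: u Hpos => [|v u] Hpos.
    case: w Hpos => [|v w] //= *; right; exists v.
    by rewrite eqxx.
  by left; exists v; rewrite /= eqxx.
split.
  move: S1 Hs; rewrite /is_solution /= => S1 Hs.
  by move: Ex; rewrite Hs Ey S1 => /addnI ->.
split.
  case: (boolP [exists i, count_mem i u < x i]) => [/existsP [i hi]|hx].
    by left; exists i; apply/eqP; rewrite subn_eq0 -ltnNge.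
  case: (boolP [exists j, count_mem j w < y j]) => [/existsP [j hj]|hy].
    by right; exists j; apply/eqP; rewrite subn_eq0 -ltnNge.
  exfalso.
  have e1 : \sum_(i < n) x i = size u.
    rewrite -sum_count; apply: eq_bigr => i _.
    apply/eqP; rewrite eqn_leq Hu andbT leqNgt; exact: (existsPn hx i).
  have e2 : \sum_(j < m) y j = size w.
    rewrite -sum_count; apply: eq_bigr => j _.
    apply/eqP; rewrite eqn_leq Hw andbT leqNgt; exact: (existsPn hy j).
  lia.
split => [i|j] /=; by rewrite subnKC.
Qed.

Lemma card_bound n m (a : 'I_n -> nat) (b : 'I_m -> nat)
  (Ha : forall i, 1 <= a i) (Hb : forall j, 1 <= b j) x y :
  is_minimal_solution a b x y -> 0 < \sum_(i < n) x i * a i ->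
  (\sum_(i < n) x i) * (\sum_(j < m) y j) <= \sum_(i < n) x i * a i.
Proof.
move=> Hmin HS.
have Hs := Hmin.1.
set S := \sum_(i < n) x i * a i in HS Hs *.
have [sa Hca] := exists_seq _ x.
have [sb Hcb] := exists_seq _ y.
have HX : \sum_(i < n) x i = size sa.
  by rewrite -sum_count; apply: eq_bigr => i _; rewrite Hca.
have HY : \sum_(j < m) y j = size sb.
  by rewrite -sum_count; apply: eq_bigr => j _; rewrite Hcb.
have Hsa : \sum_(v <- sa) a v = S.
  by rewrite -sum_count_mul; apply: eq_bigr => i _; rewrite Hca.
have Hsb : \sum_(v <- sb) b v = S.
  by rewrite /S Hs -sum_count_mul; apply: eq_bigr => j _; rewrite Hcb.
rewrite HX HY.
set X := size sa; set Y := size sb.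
pose P k := \sum_(v <- take k sa) a v.
pose Q l := \sum_(v <- take l sb) b v.
have Pmono k k' : k <= k' -> P k <= P k'.
  by move=> h; rewrite /P (@sum_take_slice _ a sa _ _ h) leq_addr.
have Qmono k k' : k <= k' -> Q k <= Q k'.
  by move=> h; rewrite /Q (@sum_take_slice _ b sb _ _ h) leq_addr.
have Pstrict k k' : k < k' -> k' <= X -> P k < P k'.
  move=> h1 h2; rewrite /P (@sum_take_slice _ a sa _ _ (ltnW h1)).
  have := @sum_pos _ a (drop k (take k' sa)) Ha; rewrite size_slice //; lia.
have Qstrict k k' : k < k' -> k' <= Y -> Q k < Q k'.
  move=> h1 h2; rewrite /Q (@sum_take_slice _ b sb _ _ (ltnW h1)).
  have := @sum_pos _ b (drop k (take k' sb)) Hb; rewrite size_slice //; lia.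
have PS k : k < X -> P k < S.
  by move=> h; rewrite -Hsa -(take_size sa); apply: Pstrict.
have QS k : k < Y -> Q k < S.
  by move=> h; rewrite -Hsb -(take_size sb); apply: Qstrict.
have Qinv l l' : Q l <= Q l' -> l <= Y -> l <= l'.
  move=> h hl; case: (leqP l l') => // hlt.
  have := Qstrict _ _ hlt hl; lia.
have key k k' l l' : k <= k' -> k' < X -> l < Y -> l' < Y ->
  (P k + S - Q l) %% S = (P k' + S - Q l') %% S -> k = k' /\ l = l'.
  move=> hkk hk' hl hl' Heq.
  have pk := PS k (leq_ltn_trans hkk hk'); have pk' := PS k' hk'.
  have ql := QS l hl; have ql' := QS l' hl'.
  have E : P k + Q l' = P k' + Q l \/ P k + Q l' + S = P k' + Q l \/
           P k + Q l' = P k' + Q l + S.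
    move: Heq; rewrite (mod2 (P k + S - Q l)); last lia.
    rewrite (mod2 (P k' + S - Q l')); last lia.
    case: ifPn => h1; case: ifPn => h2 => E; lia.
  case: (eqVneq k k') => [ekk|nkk].
    subst k'; have eq : Q l = Q l' by lia.
    have h1 := Qinv l l' (eq_leq eq) (ltnW hl).
    have h2 := Qinv l' l (eq_leq (esym eq)) (ltnW hl').
    split=> //; exact/anti_leq/andP.
  have hlt : k < k' by rewrite ltn_neqAle nkk.
  have pp := Pstrict _ _ hlt (ltnW hk').
  have Eu := @sum_take_slice _ a sa _ _ (ltnW hlt).
  have Su := @size_slice _ sa k k' (ltnW hk').
  exfalso; case: E => [E|[E|E]]; last lia.
    have hll : l <= l' by apply: Qinv; [lia | exact: ltnW].
    have Ew := @sum_take_slice _ b sb _ _ hll.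
    have Sw := @size_slice _ sb l l' (ltnW hl').
    apply: (@no_sub n m a b x y (drop k (take k' sa)) (drop l (take l' sb)) Hmin).
    - by move=> i; rewrite -Hca count_slice.
    - by move=> j; rewrite -Hcb count_slice.
    - rewrite /P /Q in Eu Ew E; lia.
    - lia.
    - rewrite HX HY; lia.
  have hll : l' <= l by apply: Qinv; [lia | exact: ltnW].
  have Ew := @sum_take_drop _ b sb l.
  apply: (@no_sub n m a b x y (drop k (take k' sa)) (take l' sb ++ drop l sb) Hmin).
  - by move=> i; rewrite -Hca count_slice.
  - move=> j; rewrite -Hcb -{3}(cat_take_drop l sb) !count_cat leq_add2r.
    exact: count_take_le.
  - rewrite big_cat /=; rewrite /P /Q in Eu Ew E; lia.
  - lia.
  - rewrite HX HY size_cat Su (size_drop l) (size_takel (ltnW hl')) -/X -/Y; lia.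
pose f (p : 'I_X * 'I_Y) : 'I_S := Ordinal (ltn_pmod (P p.1 + S - Q p.2) HS).
have inj : injective f.
  move=> [k l] [k' l'] /(congr1 val) /= Heq.
  case: (leqP k k') => h.
    have [e1 e2] := key k k' l l' h (ltn_ord k') (ltn_ord l) (ltn_ord l') Heq.
    by congr pair; apply: val_inj.
  have [e1 e2] := key k' k l' l (ltnW h) (ltn_ord k) (ltn_ord l') (ltn_ord l) (esym Heq).
  by congr pair; apply: val_inj.
by have := leq_card _ inj; rewrite card_prod !card_ord.
Qed.
Local Open Scope ring_scope.

Theorem theorem1 (n m : nat) (a : 'I_n -> nat) (b : 'I_m -> nat)
    (Ha : forall i, (1 <= a i)%N) (Hb : forall j, (1 <= b j)%N)
    (x : 'I_n -> nat) (y : 'I_m -> nat) :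
  is_minimal_solution a b x y ->
  exists lam : 'I_n -> 'I_m -> rat,
    (forall i, \sum_(j < m) lam i j * (b j)%:R = (x i)%:R) /\
    (forall j, \sum_(i < n) lam i j * (a i)%:R = (y j)%:R) /\
    \sum_(i < n) \sum_(j < m) lam i j <= 1 /\
    (forall i j, 0 <= lam i j).
Proof.
move=> Hmin.
have Hs : (\sum_(i < n) x i * a i = \sum_(j < m) y j * b j)%N := Hmin.1.
have HS : (0 < \sum_(i < n) x i * a i)%N.
  case: Hmin.2.1 => [[i hi]|[j hj]].
    have : (0 < x i * a i)%N by rewrite muln_gt0 lt0n; apply/andP; split; [apply/eqP|apply: Ha].
    rewrite (bigD1 i) //=; lia.
  have : (0 < y j * b j)%N by rewrite muln_gt0 lt0n; apply/andP; split; [apply/eqP|apply: Hb].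
  rewrite Hs (bigD1 j) //=; lia.
have HB := @card_bound _ _ _ _ Ha Hb _ _ Hmin HS.
move: Hs HS HB; set S := (\sum_(i < n) x i * a i)%N => Hs HS HB.
have S0 : (S%:R : rat) != 0 by rewrite pnatr_eq0 -lt0n.
exists (fun i j => ((x i * y j)%:R / S%:R : rat)).
split.
  move=> i.
  rewrite (eq_bigr (fun j => (x i)%:R / S%:R * (y j * b j)%:R)); last first.
    by move=> j _; rewrite !natrM; ring.
  by rewrite -mulr_sumr -natr_sum -Hs divfK.
split.
  move=> j.
  rewrite (eq_bigr (fun i => (y j)%:R / S%:R * (x i * a i)%:R)); last first.
    by move=> i _; rewrite !natrM; ring.
  by rewrite -mulr_sumr -natr_sum divfK.
split.
  rewrite (eq_bigr (fun i => (x i * \sum_(j < m) y j)%:R / S%:R)); last first.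
    by move=> i _; rewrite -mulr_suml -natr_sum big_distrr.
  rewrite -mulr_suml -natr_sum -big_distrl /=.
  by rewrite ler_pdivrMr ?ltr0n // mul1r ler_nat.
by move=> i j; rewrite divr_ge0 ?ler0n.
Qed.
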